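(* Let $k$ be a positive integer, let $K=2^{3k+5}$, and let $G$ be a $K$-almost-regular graph on $n$ vertices with average degree $d(G)=Cn^{1/k}$ for some $C>0$. Then at most $\frac{2^{2k+10}}{\sqrt{C}}\hom(C_{2k},G)$ homomorphic $2k$-cycles in $G$ are degenerate.
   Context: A graph is $K$-almost-regular if its maximum degree is at most $K$ times its minimum degree. A homomorphic $2k$-cycle in $G$ is a sequence $(v_1,\dots,v_{2k})$ of vertices of $G$ such that $v_i$ is adjacent to $v_{i+1}$ for $i=1,\dots,2k-1$ and $v_{2k}$ is adjacent to $v_1$; it is non-degenerate if the $2k$ vertices are distinct and degenerate otherwise. $\hom(C_{2k},G)$ is the number of homomorphic $2k$-cycles in $G$. *)

(* Defs.v *)
From HB Require Import structures.
From mathcomp Require Import all_boot all_order all_algebra.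
From mathcomp Require Import reals exp.
Set Implicit Arguments. Unset Strict Implicit. Unset Printing Implicit Defensive.
Import Order.TTheory GRing.Theory Num.Theory.

(* A simple graph: vertex set T (finite), adjacency e : rel T,
   assumed symmetric and irreflexive in the theorem. *)
Section Graphs.
Variables (T : finType) (e : rel T).

Definition deg (v : T) : nat := #|[set u | e v u]|.

Definition almost_regular (K : nat) : Prop :=
  forall u v : T, deg u <= K * deg v.

Definition avg_deg (R : realType) : R :=
  ((\sum_(v : T) deg v)%:R / (#|T|%:R))%R.

Definition hom_cycle (m : nat) (f : {ffun 'I_m -> T}) : bool :=
  [forall i : 'I_m, e (f i) (f (ordS i))].

Definition hom_cycles (m : nat) : {set {ffun 'I_m -> T}} :=
  [set f | hom_cycle f].

Definition degenerate_cycles (m : nat) : {set {ffun 'I_m -> T}} :=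
  [set f | hom_cycle f & ~~ injectiveb f].

End Graphs.

(* Main.v *)
Require Import Defs.
From HB Require Import structures.
From mathcomp Require Import all_boot all_order all_algebra.
From mathcomp Require Import reals exp.
From mathcomp Require Import ring lra zify.
Import Order.TTheory GRing.Theory Num.Theory.
Set Implicit Arguments. Unset Strict Implicit. Unset Printing Implicit Defensive.
Section CS.
Variables (R : realFieldType) (I : finType).
Local Open Scope ring_scope.
Lemma sum_prod (f g : I -> R) : \sum_i \sum_j f i * g j = (\sum_i f i) * (\sum_j g j).
Proof. rewrite mulr_suml; apply: eq_bigr => i _; by rewrite mulr_sumr. Qed.

Lemma CS (a b : I -> R) :
  (\sum_i a i * b i) ^+ 2 <= (\sum_i a i ^+ 2) * (\sum_i b i ^+ 2).
Proof.
have H0 : 0 <= \sum_i \sum_j (a i * b j - a j * b i)^+2.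
  by apply: sumr_ge0 => i _; apply: sumr_ge0 => j _; apply: sqr_ge0.
have E : \sum_i \sum_j (a i * b j - a j * b i)^+2 =
   \sum_i \sum_j (a i ^+2 * b j ^+2) + \sum_i \sum_j (b i ^+2 * a j^+2)
   - 2 * \sum_i \sum_j ((a i * b i) * (a j * b j)).
  rewrite mulr_sumr -big_split -sumrB /=; apply: eq_bigr => i _.
  rewrite mulr_sumr -big_split -sumrB /=; apply: eq_bigr => j _.
  ring.
rewrite E !sum_prod in H0.
set A := \sum_i a i ^+ 2 in H0 *; set B := \sum_i b i ^+ 2 in H0 *.
set S := \sum_i a i * b i in H0 *.
nra.
Qed.
End CS.

Section Walks.
Variables (T : finType) (e : rel T).
Hypothesis esym : symmetric e.
Hypothesis eirr : irreflexive e.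

Fixpoint W (l : nat) (x y : T) : nat :=
  if l is l'.+1 then (\sum_(z : T) e x z * W l' z y)%N else (x == y : nat).

Lemma WD a b x y : W (a + b) x y = (\sum_z W a x z * W b z y)%N.
Proof.
elim: a x y => [|a IH] x y /=.
  rewrite add0n (bigD1 x) //= eqxx mul1n big1 ?addn0 // => z.
  by rewrite eq_sym => /negbTE ->.
rewrite (eq_bigr (fun z => \sum_w e x z * (W a z w * W b w y)))%N; last first.
  by move=> z _; rewrite IH big_distrr.
rewrite exchange_big /=; apply: eq_bigr => w _.
by rewrite big_distrl /=; apply: eq_bigr => z _; rewrite mulnA.
Qed.

Lemma W1 x y : W 1 x y = e x y.
Proof.
rewrite /= (bigD1 y) //= eqxx muln1 big1 ?addn0 // => z /negbTE ->.
by rewrite muln0.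
Qed.

Lemma Wsym l x y : W l x y = W l y x.
Proof.
elim: l x y => [|l IH] x y; first by rewrite /= eq_sym.
rewrite -[in RHS]addn1 WD; apply: eq_bigr => z _.
by rewrite IH W1 esym mulnC.
Qed.

Lemma W2 v : W 2 v v = deg e v.
Proof.
rewrite /deg -[2]/(1+1)%N WD.
have -> : #|[set u | e v u]| = (\sum_u (e v u : nat))%N.
  rewrite -sum1_card big_mkcond /=; apply: eq_bigr => u _.
  by rewrite inE; case: (e v u).
apply: eq_bigr => z _; rewrite !W1 (esym z v); by case: (e v z).
Qed.

Lemma Wpos v j : (0 < deg e v)%N -> (0 < W (2 * j) v v)%N.
Proof.
move=> hv; elim: j => [|j IH]; first by rewrite /= eqxx.
rewrite mulnS -[(2 + _)%N]/(2 + 2 * j)%N WD (bigD1 v) // W2.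
by apply: leq_trans (leq_addr _ _); rewrite muln_gt0 hv IH.
Qed.
End Walks.
Section LogConv.
Local Open Scope ring_scope.
Variables (R : realFieldType) (u : nat -> R).
Hypothesis upos : forall j, 0 < u j.
Hypothesis ulc : forall j, u j.+1 ^+ 2 <= u j * u j.+2.

Lemma lc_cross i j : (i <= j)%N -> u i.+1 * u j <= u i * u j.+1.
Proof.
move=> /subnK <-; elim: (j - i)%N => [|m IH]; first by rewrite add0n mulrC.
rewrite addSn.
have hp := upos (m + i).
have h1 := ulc (m + i).
have h2 : 0 <= u i by apply/ltW.
have h3 : 0 < u (m+i).+1 := upos _.
have h4 : 0 < u i.+1 := upos _.
have : u i.+1 * (m + i).+1%:R * 0 = 0 by rewrite mulr0.
move=> _.
suff : u i.+1 * u (m + i).+1 * u (m + i) <= u i * u (m + i).+2 * u (m + i).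
  by rewrite ler_pM2r.
apply: le_trans (_ : u i * u (m + i).+1 * u (m+i).+1 <= _).
  by rewrite -mulrA (mulrC (u (m+i).+1)) mulrA ler_pM2r.
rewrite -!mulrA ler_wpM2l // -expr2 mulrC.
exact: h1.
Qed.

Lemma lc_major_aux a b : (1 <= a)%N -> (a <= b)%N -> u a * u b <= u 1 * u (a + b).-1.
Proof.
elim: a b => [|a IH] b // ha hab.
case: a IH ha hab => [|a] IH _ hab; first by rewrite add1n.
apply: le_trans (lc_cross (ltnW hab)) _.
have := IH b.+1 isT (leqW (ltnW hab)).
by rewrite addnS addSn.
Qed.

Lemma lc_major a b : (1 <= a)%N -> (1 <= b)%N -> u a * u b <= u 1 * u (a + b).-1.
Proof.
move=> ha hb; case: (leqP a b) => h; first exact: lc_major_aux.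
by rewrite mulrC addnC; apply: lc_major_aux => //; apply: ltnW.
Qed.

Lemma lc_upper m : (0 < m)%N -> u m <= u 0 * (u m / u m.-1) ^+ m.
Proof.
case: m => // m _ /=.
set r := u m.+1 / u m.
have hr : 0 <= r by rewrite divr_ge0 // ltW.
suff H : forall i, (i <= m.+1)%N -> u i <= u 0 * r ^+ i by apply: H.
elim=> [|i IH] hi; first by rewrite expr0 mulr1.
have c := lc_cross (ltnSE hi).
have : u i.+1 <= r * u i.
  rewrite /r mulrAC ler_pdivlMr; last exact: upos.
  by rewrite (mulrC (u m.+1)).
move=> h; apply: le_trans h _.
rewrite exprS mulrCA ler_wpM2l //; exact: IH (ltnW hi).
Qed.

Lemma lc_lower m : u 0 * (u 1 / u 0) ^+ m <= u m.
Proof.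
set s := u 1 / u 0.
elim: m => [|m IH]; first by rewrite expr0 mulr1.
have c := lc_cross (leq0n m).
have : s * u m <= u m.+1.
  rewrite /s mulrAC ler_pdivrMr; last exact: upos.
  by rewrite (mulrC (u m.+1)).
move=> h; apply: le_trans h.
rewrite exprS mulrCA ler_wpM2l // divr_ge0 // ltW //.
Qed.
End LogConv.

Section Real.
Variables (R : realFieldType) (T : finType) (e : rel T).
Hypothesis esym : symmetric e.
Hypothesis eirr : irreflexive e.
Local Open Scope ring_scope.

Definition w l x y : R := (W e l x y)%:R.
Lemma wD a b x y : w (a+b) x y = \sum_z w a x z * w b z y.
Proof. by rewrite /w WD natr_sum; apply: eq_bigr => z _; rewrite natrM. Qed.
Lemma wsym l x y : w l x y = w l y x.
Proof. by rewrite /w Wsym. Qed.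
Lemma w_ge0 l x y : 0 <= w l x y.
Proof. exact: ler0n. Qed.
Lemma w1vv v : w 1 v v = 0.
Proof. by rewrite /w W1 eirr. Qed.

Definition f v j := w (j + j) v v.
Lemma f_ge0 v j : 0 <= f v j. Proof. exact: w_ge0. Qed.
Lemma f_sq v j : f v j = \sum_z w j v z ^+ 2.
Proof. by rewrite /f wD; apply: eq_bigr => z _; rewrite (wsym j z v) expr2. Qed.
Lemma f_lc v j : f v j.+1 ^+ 2 <= f v j * f v j.+2.
Proof.
rewrite {1}/f addSnnS wD (f_sq v j) (f_sq v j.+2).
have := CS (fun z => w j v z) (fun z => w j.+2 v z).
by under eq_bigr do rewrite (wsym j.+2).
Qed.
Lemma f_pos v j : (0 < deg e v)%N -> 0 < f v j.
Proof. by move=> h; rewrite /f ltr0n addnn -mul2n; apply: Wpos. Qed.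
Lemma f1 v : f v 1 = (deg e v)%:R.
Proof. by rewrite /f /w W2. Qed.
Lemma w_odd v a : w (a + a.+1) v v ^+ 2 <= f v a * f v a.+1.
Proof.
rewrite !f_sq wD.
have := CS (fun z => w a v z) (fun z => w a.+1 v z).
by under eq_bigr do rewrite (wsym a.+1).
Qed.

Lemma PV v k l : (0 < deg e v)%N -> (1 <= l)%N -> (l < k + k)%N ->
  w l v v * w (k + k - l) v v <= f v 1 * f v (k.-1).
Proof.
move=> hv hl1 hl2.
have hR : 0 <= f v 1 * f v k.-1 by rewrite mulr_ge0 // f_ge0.
have maj := lc_major (fun j => @f_pos v j hv) (@f_lc v).
case: (ltnP 1 l) => [hl|]; last first.
  move=> h; have -> : l = 1%N by apply/eqP; rewrite eqn_leq h hl1.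
  by rewrite w1vv mul0r.
case: (ltnP l (k + k).-1) => [hl'|hl']; last first.
  have -> : (k + k - l = 1)%N by lia.
  by rewrite w1vv mulr0.
rewrite -(odd_double_half l).
case hodd: (odd l) => /=.
- set a := l./2.
  have ha : (1 <= a)%N by move: (odd_double_half l); rewrite hodd /= -/a; lia.
  have hb : (1 <= k - a - 1)%N by move: (odd_double_half l); rewrite hodd /= -/a; lia.
  set b := (k - a - 1)%N in hb *.
  have -> : (1 + a.*2 = a + a.+1)%N by lia.
  have -> : (k + k - (a + a.+1) = b + b.+1)%N by rewrite /b; lia.
  have m1 := maj a b.+1 ha isT.
  have m2 := maj a.+1 b isT hb.
  have e1 : (a + b.+1).-1 = k.-1 by rewrite /b; lia.
  have e2 : (a.+1 + b).-1 = k.-1 by rewrite /b; lia.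
  rewrite e1 in m1; rewrite e2 in m2.
  have o1 := w_odd v a. have o2 := w_odd v b.
  have g1 := f_ge0 v a. have g2 := f_ge0 v a.+1.
  have g3 := f_ge0 v b. have g4 := f_ge0 v b.+1.
  have g5 := w_ge0 (a + a.+1) v v. have g6 := w_ge0 (b + b.+1) v v.
  have g7 := f_ge0 v 1. have g8 := f_ge0 v k.-1.
  set X := w (a + a.+1) v v in o1 g5 *. set Y := w (b + b.+1) v v in o2 g6 *.
  set P := f v 1 * f v k.-1 in m1 m2 hR *.
  have : (X * Y) ^+ 2 <= P ^+ 2.
    rewrite exprMn.
    apply: le_trans (_ : (f v a * f v a.+1) * (f v b * f v b.+1) <= _).
      by apply: ler_pM => //; apply: sqr_ge0.
    rewrite expr2.
    have -> : f v a * f v a.+1 * (f v b * f v b.+1) = (f v a * f v b.+1) * (f v a.+1 * f v b) by ring.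
    by apply: ler_pM => //; apply: mulr_ge0.
  move=> hsq.
  have hXY : 0 <= X * Y by apply: mulr_ge0.
  rewrite -(ler_pXn2r (n:=2)) //; by rewrite inE.
- set a := l./2.
  have ha : (1 <= a)%N by move: (odd_double_half l); rewrite hodd /= -/a; lia.
  have hb : (1 <= k - a)%N by move: (odd_double_half l); rewrite hodd /= -/a; lia.
  have -> : (0 + a.*2 = a + a)%N by lia.
  have -> : (k + k - (a + a) = (k - a) + (k - a))%N by lia.
  have := maj a (k - a)%N ha hb.
  have -> : (a + (k - a)).-1 = k.-1 by lia.
  by [].
Qed.
End Real.

Local Open Scope ring_scope.
Lemma term_le_sum (R : realFieldType) (I : finType) (g : I -> R) i0 :
  (forall i, 0 <= g i) -> g i0 <= \sum_i g i.
Proof. by move=> h; rewrite (bigD1 i0) //= lerDl sumr_ge0. Qed.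

Lemma deg_sum (T : finType) (e : rel T) v : deg e v = (\sum_u (e v u : nat))%N.
Proof.
rewrite /deg -sum1_card big_mkcond /=; apply: eq_bigr => u _.
by rewrite inE; case: (e v u).
Qed.

Lemma sum_cst (R : realFieldType) (I : finType) (c : R) : \sum_(i : I) c = c * #|I|%:R.
Proof. by rewrite sumr_const mulr_natr. Qed.

Section Global.
Variables (R : realFieldType) (T : finType) (e : rel T).
Hypothesis esym : symmetric e.
Hypothesis eirr : irreflexive e.
Local Open Scope ring_scope.
Local Notation w := (@w R T e).
Local Notation f := (@f R T e).

Definition F j := \sum_v f v j.
Definition s a z := \sum_x w a z x.
Definition G j := \sum_x \sum_y w (j + j) x y.

Lemma F_lc j : F j.+1 ^+2 <= F j * F j.+2.
Proof.
have E : forall i, F i = \sum_x \sum_z w i x z ^+ 2.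
  by move=> i; apply: eq_bigr => x _; apply: f_sq.
have E2 : F j.+1 = \sum_x \sum_z w j x z * w j.+2 x z.
  rewrite /F; apply: eq_bigr => x _; rewrite /f addSnnS wD.
  by apply: eq_bigr => z _; rewrite (@wsym R T e esym j.+2).
rewrite E2 !E !pair_bigA /=.
exact: (CS (fun p => w j p.1 p.2) (fun p => w j.+2 p.1 p.2)).
Qed.

Lemma F_pos v0 j : (0 < deg e v0)%N -> 0 < F j.
Proof.
move=> h; apply: (lt_le_trans (@f_pos R T e esym v0 j h)).
have := @term_le_sum R T (fun v => f v j) v0.
by apply => i; apply: w_ge0.
Qed.

Lemma g_split a b : \sum_x \sum_y w (a + b) x y = \sum_z s a z * s b z.
Proof.
under eq_bigr do under eq_bigr do rewrite wD.
under eq_bigr do rewrite exchange_big.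
rewrite exchange_big; apply: eq_bigr => z _.
rewrite /s -sum_prod; apply: eq_bigr => x _; apply: eq_bigr => y _.
by rewrite (@wsym R T e esym a x z).
Qed.

Lemma G_lc j : G j.+1 ^+2 <= G j * G j.+2.
Proof.
rewrite /G addSnnS !g_split.
have E : forall i, \sum_z s i z * s i z = \sum_z s i z ^+ 2.
  by move=> i; apply: eq_bigr => z _; rewrite expr2.
rewrite !E; exact: CS.
Qed.

Lemma F_le_G j : F j <= G j.
Proof.
rewrite /F /G; apply: ler_sum => x _; rewrite /f.
have := @term_le_sum R T (fun y => w (j + j) x y) x; by apply => y; apply: w_ge0.
Qed.

Lemma F0 : F 0 = #|T|%:R.
Proof. by rewrite /F (eq_bigr (fun _ => 1)) ?sum_cst ?mul1r // => v _; rewrite /f /w /= eqxx. Qed.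

Lemma G0 : G 0 = #|T|%:R.
Proof.
rewrite /G (eq_bigr (fun _ => 1)) ?sum_cst ?mul1r // => x _.
rewrite (bigD1 x) //= big1 ?addr0; first by rewrite /w /= eqxx.
by move=> y /negbTE; rewrite /w /= eq_sym => ->.
Qed.

Lemma s1 z : s 1 z = (deg e z)%:R.
Proof. by rewrite /s deg_sum natr_sum; apply: eq_bigr => x _; rewrite /w W1. Qed.

Lemma G1 : G 1 = \sum_z (deg e z)%:R ^+ 2.
Proof. by rewrite /G g_split; apply: eq_bigr => z _; rewrite s1 expr2. Qed.

Lemma G_le_F k : G k <= #|T|%:R * F k.
Proof.
rewrite /G g_split /F mulr_sumr; apply: ler_sum => z _.
have := CS (fun _ => 1) (fun x => w k z x).
rewrite (eq_bigr (fun _ => 1) (fun _ _ => expr1n _ _)) sum_cst mul1r.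
rewrite (@f_sq R T e esym) -expr2.
by under eq_bigr do rewrite mul1r.
Qed.
End Global.

Section Analytic.
Variables (R : realFieldType) (T : finType) (e : rel T).
Hypothesis esym : symmetric e.
Hypothesis eirr : irreflexive e.
Local Open Scope ring_scope.
Local Notation w := (@w R T e).
Local Notation f := (@f R T e).
Local Notation F := (@F R T e).
Local Notation G := (@G R T e).

Lemma analytic (k : nat) (K C d : R) :
  (0 < k)%N -> 1 <= C -> (0 < #|T|)%N -> (forall v, (0 < deg e v)%N) ->
  d = (\sum_v deg e v)%:R / #|T|%:R ->
  d ^+ k = C ^+ k * #|T|%:R ->
  (forall v, (deg e v)%:R <= K * d) ->
  \sum_v f v 1 * f v k.-1 <= K / C * F k.
Proof.
move=> hk hC hT hdeg hd hdk hK.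
have [v0 _] : exists v0 : T, true by case/card_gt0P: hT => v _; exists v.
set n : R := #|T|%:R.
have hn : 0 < n by rewrite ltr0n.
have Fpos : forall j, 0 < F j := fun j => @F_pos R T e esym v0 j (hdeg v0).
have Gpos : forall j, 0 < G j := fun j => lt_le_trans (Fpos j) (@F_le_G R T e j).
have hS : 0 < (\sum_v deg e v)%:R :> R.
  rewrite ltr0n; apply: (leq_trans (hdeg v0)).
  by rewrite (bigD1 v0) //= leq_addr.
have dpos : 0 < d by rewrite hd divr_gt0.
have A1 : d ^+ 2 <= G 1 / G 0.
  rewrite (@G1 R T e esym) (@G0 R T e) hd -/n expr_div_n ler_pdivrMr ?exprn_gt0 //.
  rewrite expr2 mulrA divfK ?gt_eqF // mulrC.
  have E : \sum_v (1 : R) * (deg e v)%:R = (\sum_v deg e v)%:R.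
    by rewrite natr_sum; apply: eq_bigr => v _; rewrite mul1r.
  have := CS (fun _ => 1 : R) (fun v => (deg e v)%:R).
  by rewrite (eq_bigr (fun _ => 1) (fun _ _ => expr1n _ _)) sum_cst mul1r -/n E -expr2 (mulrC _ n).
have A2 := lc_lower Gpos (@G_lc R T e esym) k.
have A3 := @G_le_F R T e esym k.
rewrite (@G0 R T e) -/n in A2 A3.
have A23 : (d ^+ 2) ^+ k <= F k.
  rewrite -(ler_pM2l hn); apply: le_trans A3.
  apply: le_trans A2; rewrite ler_pM2l //.
  rewrite ler_pXn2r // ?inE.
  - by rewrite (@G0 R T e) in A1.
  - by rewrite nnegrE exprn_ge0 // ltW.
  - by rewrite nnegrE divr_ge0 // ltW.
have A4 := lc_upper Fpos (@F_lc R T e esym) hk.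
rewrite (@F0 R T e) -/n in A4.
set rho := F k / F k.-1 in A4.
have rpos : 0 < rho by rewrite divr_gt0.
have A5 : (C * d) ^+ k <= rho ^+ k.
  rewrite -(ler_pM2l hn) exprMn mulrA (mulrC n) -hdk -exprMn -expr2.
  exact: le_trans A23 A4.
have Cpos : 0 < C by apply: lt_le_trans ltr01 hC.
have A6 : C * d <= rho.
  move: A5; rewrite ler_pXn2r //.
  - by rewrite nnegrE mulr_ge0 // ltW.
  - by rewrite nnegrE ltW.
apply: le_trans (_ : \sum_v K * d * f v k.-1 <= _).
  apply: ler_sum => v _; rewrite (@f1 R T e esym); apply: ler_wpM2r => //; exact: (@f_ge0 R T e).
rewrite -mulr_sumr.
have hFk1 : F k.-1 = F k / rho by rewrite /rho invf_div mulrC divfK // gt_eqF.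
rewrite -/(F k.-1) hFk1.
have hK0 : 0 <= K.
  have : 0 <= K * d by apply: le_trans (hK v0).
  by rewrite pmulr_lge0.
have FK := Fpos k.
rewrite mulrA ler_pdivrMr //.
apply: le_trans (_ : K / C * F k * (C * d) <= _).
  rewrite (_ : K / C * F k * (C * d) = K * d * F k) //.
  by field; rewrite gt_eqF.
by rewrite ler_wpM2l // mulr_ge0 ?divr_ge0 // ltW.
Qed.
End Analytic.
Local Close Scope ring_scope.
Lemma card_sum (I : finType) (A : {set I}) : #|A| = \sum_i (i \in A : nat).
Proof. by rewrite -sum1_card big_mkcond /=; apply: eq_bigr => i _; case: (i \in A). Qed.

Section Comb.
Variables (T : finType) (e : rel T).

Fixpoint pathok (h : nat -> T) (l : nat) : bool :=
  if l is l'.+1 then e (h 0) (h 1) && pathok (fun t => h t.+1) l' else true.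

Lemma pathokP h l : reflect (forall t, t < l -> e (h t) (h t.+1)) (pathok h l).
Proof.
elim: l h => [|l IH] h /=; first by apply: ReflectT.
apply: (iffP andP) => [[h0 /IH hr] [|t] ht //|H]; first by apply: hr.
by split; [apply: H | apply/IH => t ht; apply: H].
Qed.

Lemma pathok_ext h h' l : (forall t, t <= l -> h t = h' t) -> pathok h l = pathok h' l.
Proof.
move=> H; apply/pathokP/pathokP => P t ht.
  by rewrite -!H ?P // ltnW.
by rewrite !H ?P // ltnW.
Qed.

Definition walkset l x y : {set {ffun 'I_l.+1 -> T}} :=
  [set g : {ffun 'I_l.+1 -> T} | (g (inord 0) == x) && (g (inord l) == y) && pathok (fun t => g (inord t)) l].

Definition fcons m (z : T) (g : {ffun 'I_m -> T}) : {ffun 'I_m.+1 -> T} :=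
  [ffun i => if unlift ord0 i is Some j then g j else z].
Definition ftail m (g : {ffun 'I_m.+1 -> T}) : {ffun 'I_m -> T} :=
  [ffun j => g (lift ord0 j)].

Lemma sum_ffunS m (Fn : {ffun 'I_m.+1 -> T} -> nat) :
  (\sum_g Fn g = \sum_z \sum_(g' : {ffun 'I_m -> T}) Fn (fcons z g'))%N.
Proof.
rewrite pair_bigA /= (reindex (fun p : T * {ffun 'I_m -> T} => fcons p.1 p.2)) //.
exists (fun g : {ffun 'I_m.+1 -> T} => (g ord0, ftail g)) => [[z g'] _ | g _] /=.
  rewrite /fcons /ftail ffunE unlift_none; congr pair.
  by apply/ffunP => j; rewrite !ffunE liftK.
apply/ffunP => i; rewrite /fcons /ftail !ffunE.
by case: unliftP => [j ->|->]; rewrite ?ffunE.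
Qed.

Lemma fcons0 m z (g : {ffun 'I_m.+1 -> T}) : fcons z g (inord 0) = z.
Proof.
rewrite /fcons ffunE (_ : inord 0 = ord0) ?unlift_none //.
by apply: val_inj; rewrite /= inordK.
Qed.

Lemma fconsS m z (g : {ffun 'I_m.+1 -> T}) t : t <= m ->
  fcons z g (inord t.+1) = g (inord t).
Proof.
move=> ht; rewrite /fcons ffunE.
have -> : inord t.+1 = lift ord0 (inord t : 'I_m.+1).
  by apply: val_inj; rewrite /= /bump /= !inordK.
by rewrite liftK.
Qed.

Lemma walkset0 x y : #|walkset 0 x y| = (x == y).
Proof.
case: eqP => [<-|nxy].
  rewrite (_ : walkset 0 x x = [set [ffun=> x]]) ?cards1 //.
  apply/setP => g; rewrite !inE.
  apply/idP/eqP => [/andP[/andP[/eqP h _] _]|->]; last by rewrite !ffunE eqxx.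
  apply/ffunP => i; rewrite ffunE -h; congr (g _); apply: val_inj.
  by rewrite /= inordK //; case: i => [[]].
apply/eqP; rewrite cards_eq0; apply/eqP/setP => g; rewrite !inE.
by apply/negP => /andP[/andP[/eqP h1 /eqP h2] _]; apply: nxy; rewrite -h1 -h2.
Qed.

Lemma card_walkset l x y : #|walkset l x y| = W e l x y.
Proof.
elim: l x => [|l IH] x; first by rewrite walkset0.
rewrite card_sum sum_ffunS /=.
rewrite (bigD1 x) //=.
rewrite (_ : (\sum_(z | z != x) \sum_g' (fcons z g' \in walkset l.+1 x y : nat)) = 0)%N ?addn0; last first.
  by apply: big1 => z /negbTE zx; apply: big1 => g _; rewrite inE fcons0 zx.
rewrite (eq_bigr (fun g : {ffun 'I_l.+1 -> T} =>
             \sum_z (e x z * (g \in walkset l z y)))%N); last first.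
  move=> g _; rewrite inE /= !fcons0 (fconsS _ _ (leq0n l)) (fconsS _ _ (leqnn l)) eqxx /=.
  rewrite (bigD1 (g (inord 0))) //= big1 ?addn0; last first.
    by move=> z nz; rewrite inE [g (inord 0) == z]eq_sym (negbTE nz) muln0.
  rewrite inE eqxx /=.
  rewrite (@pathok_ext _ (fun t => g (inord t))); last by move=> t ht; rewrite fconsS.
  by case: (e x _); case: (_ == y); case: pathok.
rewrite exchange_big /=; apply: eq_bigr => z _.
by rewrite -big_distrr /= -card_sum IH.
Qed.
End Comb.

Lemma nat_term_le (I : finType) (F : I -> nat) i0 : F i0 <= \sum_i F i.
Proof. by rewrite (bigD1 i0) //= leq_addr. Qed.

Section Cycles.
Variables (T : finType) (e : rel T) (m : nat) (hm : 0 < m).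

Definition cf (f : {ffun 'I_m -> T}) t := f (Ordinal (ltn_pmod t hm)).

Lemma cf_val f (i : 'I_m) : cf f i = f i.
Proof. by rewrite /cf; congr (f _); apply: val_inj; rewrite /= modn_small. Qed.
Lemma cf_mod f t : cf f (t %% m) = cf f t.
Proof. by rewrite /cf; congr (f _); apply: val_inj; rewrite /= modn_mod. Qed.
Lemma cf_addm f t : cf f (t + m) = cf f t.
Proof. by rewrite /cf; congr (f _); apply: val_inj; rewrite /= modnDr. Qed.

Lemma hom_cf f : hom_cycle e f -> forall t, e (cf f t) (cf f t.+1).
Proof.
move=> /forallP H t; have := H (Ordinal (ltn_pmod t hm)).
rewrite /cf; congr (e (f _) (f _)); apply: val_inj => /=.
by rewrite -addn1 modnDml addn1.
Qed.

Lemma hom_ge : (\sum_x W e m x x <= #|hom_cycles e m|)%N.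
Proof.
set CW := [set g : {ffun 'I_m.+1 -> T} | g \in walkset e m (g (inord 0)) (g (inord 0))].
have E : (\sum_x W e m x x = #|CW|)%N.
  under eq_bigr do rewrite -card_walkset card_sum.
  rewrite exchange_big card_sum; apply: eq_bigr => g _ /=.
  rewrite (bigD1 (g (inord 0))) //= big1 ?addn0; first by rewrite /CW !inE.
  by move=> x nx; rewrite inE [g (inord 0) == x]eq_sym (negbTE nx).
rewrite E.
set psi := fun g : {ffun 'I_m.+1 -> T} => [ffun i : 'I_m => g (inord i)].
rewrite -(@card_in_imset _ _ psi); last first.
  move=> g g'; rewrite !inE => /andP[/andP[_ /eqP h1] _] /andP[/andP[_ /eqP h1'] _] hpsi.
  apply/ffunP => i; rewrite -(inord_val i).
  case: (ltnP i m) => [hi|hi].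
    have := congr1 (fun f : {ffun 'I_m -> T} => f (Ordinal hi)) hpsi.
    by rewrite /psi !ffunE.
  have him : (i : nat) = m by apply/eqP; rewrite eqn_leq hi -ltnS ltn_ord.
  rewrite him h1 h1'.
  have := congr1 (fun f : {ffun 'I_m -> T} => f (Ordinal hm)) hpsi.
  by rewrite /psi !ffunE.
apply: subset_leq_card; apply/subsetP => y /imsetP[g].
rewrite !inE => /andP[/andP[_ /eqP h1] /pathokP hp] ->.
apply/forallP => i; rewrite /psi !ffunE /=.
case: (ltnP i.+1 m) => [hi|hi].
  by rewrite modn_small //; apply: hp.
have him : i.+1 = m by apply/eqP; rewrite eqn_leq hi ltn_ord.
rewrite him modnn.
by have := hp i (ltn_ord i); rewrite him h1.
Qed.

Definition Sij (i j : 'I_m) := [set f : {ffun 'I_m -> T} | hom_cycle e f & f i == f j].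

Lemma deg_le : (#|degenerate_cycles e m| <= \sum_(i : 'I_m) \sum_(j : 'I_m) ((i < j) * #|Sij i j|))%N.
Proof.
rewrite card_sum.
apply: (@leq_trans (\sum_(f : {ffun 'I_m -> T}) \sum_(i : 'I_m) \sum_(j : 'I_m) ((i < j) * (f \in Sij i j)))%N).
  apply: leq_sum => f _; rewrite inE.
  case: andP => //= [[hf /injectivePn [i0 [j0 nij eqij]]]].
  wlog lt : i0 j0 nij eqij / (i0 < j0)%N.
    move=> Hw; case: (ltngtP i0 j0) => h; first exact: Hw h.
      by apply: (Hw j0 i0) => //; rewrite eq_sym.
    by move: nij; rewrite (val_inj h) eqxx.
  apply: leq_trans (nat_term_le _ i0); apply: leq_trans (nat_term_le _ j0).
  by rewrite lt inE hf eqij eqxx.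
rewrite exchange_big; apply: leq_sum => i _; rewrite exchange_big; apply: leq_sum => j _ /=.
by rewrite card_sum big_distrr.
Qed.

Lemma Sij_le (i j : 'I_m) : (i < j)%N ->
  (#|Sij i j| <= \sum_v W e (j - i) v v * W e (m - (j - i)) v v)%N.
Proof.
move=> hij; set l := (j - i)%N.
set Sv := fun v => [set f : {ffun 'I_m -> T} | hom_cycle e f & (f i == v) && (f j == v)].
have E : #|Sij i j| = (\sum_v #|Sv v|)%N.
  rewrite card_sum; under [RHS]eq_bigr do rewrite card_sum.
  rewrite exchange_big; apply: eq_bigr => f _ /=.
  rewrite (bigD1 (f i)) //= big1 ?addn0; first by rewrite /Sv !inE eqxx (eq_sym (f j)).
  by move=> v nv; rewrite /Sv inE [f i == v]eq_sym (negbTE nv) andbF.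
rewrite E; apply: leq_sum => v _.
rewrite -!card_walkset -cardsX.
have hi := ltn_ord i; have hj := ltn_ord j.
set phi := fun f => ([ffun t : 'I_l.+1 => cf f (i + t)], [ffun t : 'I_(m - l).+1 => cf f (j + t)]).
rewrite -(@card_in_imset _ _ phi); last first.
  move=> f f' _ _ /= [h1 h2].
  have H1 : forall t, (t <= l)%N -> cf f (i + t) = cf f' (i + t).
    move=> t ht; have := congr1 (fun g : {ffun 'I_l.+1 -> T} => g (inord t)) h1.
    by rewrite !ffunE inordK.
  have H2 : forall t, (t <= m - l)%N -> cf f (j + t) = cf f' (j + t).
    move=> t ht; have := congr1 (fun g : {ffun 'I_(m - l).+1 -> T} => g (inord t)) h2.
    by rewrite !ffunE inordK.
  apply/ffunP => s; rewrite -!cf_val.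
  have hs := ltn_ord s.
  case: (ltnP s i) => [si|si2].
    rewrite -!(cf_addm _ s) (_ : (s + m = j + (s + m - j))%N); last by lia.
    by apply: H2; rewrite /l; lia.
  case: (leqP s j) => [sj|js].
    by rewrite (_ : (s : nat) = i + (s - i))%N; [apply: H1; rewrite /l; lia | lia].
  by rewrite (_ : (s : nat) = j + (s - j))%N; [apply: H2; rewrite /l; lia | lia].
apply: subset_leq_card; apply/subsetP => y /imsetP[f].
rewrite /Sv inE => /andP[hf /andP[/eqP fi /eqP fj]] ->.
have hc := hom_cf hf.
rewrite inE /=; apply/andP; split; rewrite inE !ffunE !inordK //.
- rewrite addn0 cf_val fi eqxx /=.
  rewrite (_ : (i + l = j)%N); last by rewrite /l; lia.
  rewrite cf_val fj eqxx /=.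
  rewrite (@pathok_ext _ _ _ (fun t => cf f (i + t))); last by move=> t ht; rewrite ffunE inordK.
  by apply/pathokP => t _; rewrite addnS; apply: hc.
- rewrite addn0 cf_val fj eqxx /=.
  rewrite (_ : (j + (m - l) = i + m)%N); last by rewrite /l; lia.
  rewrite cf_addm cf_val fi eqxx /=.
  rewrite (@pathok_ext _ _ _ (fun t => cf f (j + t))); last by move=> t ht; rewrite ffunE inordK.
  by apply/pathokP => t _; rewrite addnS; apply: hc.
Qed.
End Cycles.
Lemma nat_bound k : ((k.*2) ^ 2 * 2 ^ (3 * k + 5) <= 2 ^ (2 * k + 10) * 2 ^ (2 * k + 10))%N.
Proof.
have h : forall k, ((k + 3) ^ 2 <= 2 ^ (k + 4))%N.
  elim=> [|j IH] //; rewrite !addSn (expnS 2 (j + 4)); move: IH; set X := (2 ^ (j + 4))%N; nia.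
have := h k; rewrite !expnD expn0 !muln1 -muln2 => hh.
set a := (2 ^ k)%N in hh *.
have h1 : ((k + 3) ^ 2 * (a * a * a) <= a * 2 ^ 4 * (a * a * a))%N.
  by rewrite leq_mul2r hh orbT.
have h2 : (k ^ 2 <= (k + 3) ^ 2)%N by rewrite leq_exp2r // leq_addr.
have h3 : (k ^ 2 * (a * a * a) <= a * 2 ^ 4 * (a * a * a))%N.
  by apply: leq_trans h1; rewrite leq_mul2r h2 orbT.
move: h3; nia.
Qed.

Unset Implicit Arguments.
Local Open Scope ring_scope.
Theorem lemma4p3 (R : realType) (T : finType) (e : rel T) (k : nat) (C : R) :
  symmetric e -> irreflexive e -> (0 < k)%N ->
  almost_regular e (2 ^ (3 * k + 5)) ->
  0 < C ->
  avg_deg e R = C * (#|T|%:R) `^ (k%:R)^-1 ->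
  (#|degenerate_cycles e k.*2|)%:R
    <= (2 ^ (2 * k + 10))%N%:R / Num.sqrt C * (#|hom_cycles e k.*2|)%:R.
Proof.
move=> esym eirr hk hreg hC hd.
set m := k.*2.
have hm : (0 < m)%N by rewrite /m double_gt0.
set H := #|hom_cycles e m|. set D := #|degenerate_cycles e m|.
set P : R := (2 ^ (2 * k + 10))%N%:R.
have hDH : (D <= H)%N.
  by apply: subset_leq_card; apply/subsetP => f; rewrite !inE => /andP[].
have sC : 0 < Num.sqrt C by rewrite sqrtr_gt0.
have hP : 1 <= P by rewrite ler1n expn_gt0.
have Hge0 : 0 <= H%:R :> R by [].
case: (lerP (Num.sqrt C) P) => hsP.
  apply: le_trans (_ : H%:R <= _); first by rewrite ler_nat.
  rewrite -{1}[H%:R]mul1r ler_wpM2r // ler_pdivlMr // mul1r //.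
have sq := sqr_sqrtr (ltW hC).
have hC1 : 1 <= C by nra.
case: (posnP #|T|) => hT.
  have -> : D = 0%N.
    apply/eqP; rewrite -leqn0; apply: leq_trans (max_card _) _.
    by rewrite card_ffun hT card_ord exp0n.
  by rewrite mulr_ge0 // divr_ge0 // ltW // (lt_le_trans ltr01 hP).
set n : R := #|T|%:R.
have hn : 0 < n by rewrite ltr0n.
set K : R := (2 ^ (3 * k + 5))%N%:R.
set d := avg_deg e R.
have hd' : d = (\sum_v deg e v)%:R / #|T|%:R by [].
have hdk : d ^+ k = C ^+ k * #|T|%:R.
  rewrite /d hd exprMn; congr (_ * _).
  rewrite -powR_mulrn ?powR_ge0 // -powRrM mulVf ?powRr1 ?ler0n //.
  by rewrite pnatr_eq0 -lt0n.
have dpos : 0 < d by rewrite /d hd mulr_gt0 // powR_gt0.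
have Spos : (0 < \sum_v deg e v)%N.
  move: dpos; rewrite hd'; case: posnP => [->|//]; by rewrite mul0r ltxx.
have [u hu] : exists u, (0 < deg e u)%N.
  case: (pickP (fun u => 0 < deg e u)%N) => [u hu | h]; first by exists u.
  have h0 : (\sum_v deg e v = 0)%N by apply: big1 => w0 _; apply/eqP; rewrite -leqn0 leqNgt h.
  by rewrite h0 in Spos.
have hdeg : forall v, (0 < deg e v)%N.
  move=> v; rewrite lt0n; apply/negP => /eqP h0.
  have := hreg u v; rewrite h0 muln0 leqn0 => /eqP h1; by rewrite h1 in hu.
have hK : forall v, (deg e v)%:R <= K * d.
  move=> v; rewrite hd' mulrA ler_pdivlMr // -!natrM ler_nat.
  have : (\sum_(u : T) deg e v <= \sum_(u : T) 2 ^ (3 * k + 5) * deg e u)%N by apply: leq_sum => u0 _; apply: hreg.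
  by rewrite -big_distrr /= sum_nat_const cardT -cardE mulnC.
have An := @analytic R T e esym k K C d hk hC1 hT hdeg hd' hdk hK.
set B := \sum_v (@f R T e) v 1 * (@f R T e) v k.-1.
have B0 : 0 <= B by apply: sumr_ge0 => v _; apply: mulr_ge0; apply: f_ge0.
have HF : (@F R T e) k <= H%:R.
  rewrite /F /f /w -natr_sum ler_nat.
  have -> : (k + k = m)%N by rewrite /m addnn.
  exact: hom_ge.
have h1 := @deg_le T e m.
have h2 : (D <= \sum_(i : 'I_m) \sum_(j : 'I_m) (i < j) * \sum_v W e (j - i) v v * W e (m - (j - i)) v v)%N.
  apply: leq_trans h1 _; apply: leq_sum => i _; apply: leq_sum => j _.
  case: ltnP => //= hij; rewrite !mul1n; exact: Sij_le.
have HD : D%:R <= (m * m)%N%:R * B.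
  rewrite -(ler_nat R) in h2; apply: le_trans h2 _.
  rewrite natr_sum; under eq_bigr do rewrite natr_sum.
  apply: le_trans (_ : \sum_(i : 'I_m) \sum_(j : 'I_m) B <= _); last first.
    by rewrite !sum_cst card_ord natrM le_eqVlt; apply/orP; left; apply/eqP; ring.
  apply: ler_sum => i _; apply: ler_sum => j _; rewrite natrM.
  case: ltnP => hij /=; last by rewrite mul0r.
  rewrite mul1r natr_sum; apply: ler_sum => v _; rewrite natrM.
  have hl1 : (1 <= j - i)%N by rewrite subn_gt0.
  have hl2 : (j - i < k + k)%N by rewrite addnn; apply: leq_ltn_trans (leq_subr _ _) (ltn_ord j).
  have := @PV R T e esym eirr v k (j - i) (hdeg v) hl1 hl2.
  have em : (k + k - (j - i) = m - (j - i))%N by rewrite /m addnn.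
  by rewrite em.
have Cpos := hC.
have key : (m * m)%N%:R * K / C <= P / Num.sqrt C.
  have nb := nat_bound k.
  rewrite -/m -(ler_nat R) !natrM -/P in nb.
  have e2 : (m * m)%N%:R * K <= P * Num.sqrt C.
    rewrite natrM; apply: le_trans nb _.
    by rewrite ler_wpM2l ?ltW // (lt_le_trans ltr01 hP).
  rewrite -{1}sq ler_pdivrMr ?exprn_gt0 // expr2 mulrA divfK ?gt_eqF //.
have KC0 : 0 <= (m * m)%N%:R * K / C by rewrite divr_ge0 // ?mulr_ge0 // ltW.
apply: le_trans HD _.
apply: le_trans (_ : (m * m)%N%:R * (K / C * H%:R) <= _).
  rewrite ler_wpM2l //; apply: le_trans An _; rewrite ler_wpM2l //.
  by rewrite divr_ge0 // ltW.
rewrite mulrA mulrA ler_wpM2r //.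
Qed.
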